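(* For every graph $G$ and every $c\in[\frac12,1)$, $\mathrm{bn}(G)\le \frac{1}{1-c}\,\mathrm{sep}^*_c(G)$.
   Context: Two subgraphs $A,B$ of $G$ touch if they share a vertex or some edge of $G$ has one endpoint in $A$ and the other in $B$. A bramble is a set of connected subgraphs of $G$ that pairwise touch; a hitting set of a bramble is a set of vertices meeting every element; the order of a bramble is the minimum size of a hitting set; the bramble number $\mathrm{bn}(G)$ is the maximum order of a bramble in $G$. For $S\subseteq V(G)$ and $c\in[\frac12,1)$, a $(k,S,c)^*$-separator is a set $X\subseteq V(G)$ with $|X|\le k$ such that no component of $G-X$ contains more than $c|S|$ vertices of $S\setminus X$. $\mathrm{sep}^*_c(G)$ is the minimum integer $k$ such that $G$ has a $(k,S,c)^*$-separator for every $S\subseteq V(G)$. *)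

(* Defs.v *)
From HB Require Import structures.
From mathcomp Require Import all_boot all_order all_algebra.
From mathcomp Require Import reals.
Set Implicit Arguments. Unset Strict Implicit. Unset Printing Implicit Defensive.
Import Order.TTheory GRing.Theory Num.Theory.

(* A finite simple graph: vertex type T : finType, adjacency e : rel T
   (symmetry and irreflexivity are hypotheses of the theorem). *)

Section Graphs.
Variables (T : finType) (e : rel T).

Definition induced_rel (A : {set T}) : rel T :=
  [rel x y | [&& x \in A, y \in A & e x y]].

(* A vertex set A spans a connected subgraph: nonempty, and G[A] connected.
   (A subgraph is connected iff it is nonempty and its vertex set induces a
   connected subgraph; touching and hitting depend only on vertex sets.) *)
Definition connected_set (A : {set T}) : bool :=
  (A != set0) && [forall x in A, forall y in A, connect (induced_rel A) x y].

Definition touch (A B : {set T}) : bool :=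
  [exists x, (x \in A) && (x \in B)] ||
  [exists x, exists y, [&& x \in A, y \in B & e x y]].

Definition bramble (BB : {set {set T}}) : bool :=
  [forall A in BB, connected_set A] &&
  [forall A in BB, forall B in BB, touch A B].

Definition hitting (BB : {set {set T}}) (X : {set T}) : bool :=
  [forall A in BB, [exists x, (x \in A) && (x \in X)]].

(* order: minimum size of a hitting set (setT hits every bramble, since
   bramble elements are nonempty, so #|T| is an upper bound) *)
Definition bramble_order (BB : {set {set T}}) : nat :=
  \big[minn/#|T|]_(X : {set T} | hitting BB X) #|X|.

Definition bramble_number : nat :=
  \max_(BB : {set {set T}} | bramble BB) bramble_order BB.

Definition comp_rel (X : {set T}) (v w : T) : bool :=
  connect (induced_rel (~: X)) v w.

Variable R : realType.

Definition star_separator (k : nat) (S : {set T}) (c : R) (X : {set T}) : bool :=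
  (#|X| <= k)%N &&
  [forall v in ~: X,
     (#|[set w in S :\: X | comp_rel X v w]|%:R <= c * #|S|%:R)%R].

Definition sep_ok (c : R) (k : nat) : bool :=
  [forall S : {set T}, exists X : {set T}, star_separator k S c X].

Lemma sep_ok_ex (c : R) : (0 <= c)%R -> exists k, sep_ok c k.
Proof.
move=> c0; exists #|T|; apply/forallP => S; apply/existsP; exists setT.
rewrite /star_separator max_card /=; apply/forallP => v.
by rewrite setCT in_set0.
Qed.

End Graphs.

(* sep*_c(G): the minimum k such that G has a (k,S,c)*-separator for every S.
   For c < 0 (outside the intended range) we default to 0. *)
Definition sep_star (T : finType) (e : rel T) (R : realType) (c : R) : nat :=
  match boolP (0 <= c)%R with
  | AltTrue h => ex_minn (sep_ok_ex e h)
  | AltFalse _ => 0%N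
  end.

(* Main.v *)
Require Import Defs.
From HB Require Import structures.
From mathcomp Require Import all_boot all_order all_algebra.
From mathcomp Require Import reals.
From mathcomp Require Import zify.
Import Order.TTheory GRing.Theory Num.Theory.

Lemma bigmin_le (I : eqType) (r : seq I) (P : pred I) (F : I -> nat) i0 x0 :
  i0 \in r -> P i0 -> (\big[minn/x0]_(i <- r | P i) F i <= F i0)%N.
Proof.
elim: r => // a r IH; rewrite in_cons big_cons; case/orP => [/eqP<-|ir] Pi.
  by rewrite Pi geq_minl.
case: (P a); last exact: IH.
by rewrite geq_min IH ?orbT.
Qed.

Section Aux.
Variables (T : finType) (e : rel T) (e_sym : symmetric e).

Lemma conn_lift (A X : {set T}) x y :
  A \subset ~: X -> connect (induced_rel e A) x y ->
  connect (induced_rel e (~: X)) x y.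
Proof.
move=> sAX; apply: connect_sub => u v /=.
case/and3P => uA vA euv; apply: connect1.
by rewrite /induced_rel /= (subsetP sAX _ uA) (subsetP sAX _ vA).
Qed.

Lemma hit_comp (BB : {set {set T}}) (S X B : {set T}) v :
  bramble e BB -> hitting BB S -> B \in BB -> B \subset ~: X -> v \in B ->
  hitting BB (X :|: [set w in S :\: X | comp_rel e X v w]).
Proof.
case/andP => /forallP Hc /forallP Ht /forallP HS BinB sBX vB.
apply/forallP => A; apply/implyP => AinB.
case: (boolP [exists x, (x \in A) && (x \in X)]).
  case/existsP => x /andP [xA xX]; apply/existsP; exists x.
  by rewrite xA in_setU xX.
move=> nAX.
have sAX : A \subset ~: X.
  apply/subsetP => x xA; rewrite in_setC; apply/negP => xX.
  by move/negP: nAX; apply; apply/existsP; exists x; rewrite xA.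
have /andP [_ cA] := implyP (Hc A) AinB.
have /andP [_ cB] := implyP (Hc B) BinB.
move: (implyP (HS A) AinB) => /existsP [s /andP [sA sS]].
have conB : forall y, y \in B -> comp_rel e X v y.
  move=> y yB; rewrite /comp_rel; apply: (@conn_lift B X v y sBX).
  by move/forallP: cB => /(_ v) /implyP /(_ vB) /forallP /(_ y) /implyP /(_ yB).
have conA : forall x, x \in A -> connect (induced_rel e (~: X)) x s.
  move=> x xA; apply: (@conn_lift A X x s sAX).
  by move/forallP: cA => /(_ x) /implyP /(_ xA) /forallP /(_ s) /implyP /(_ sA).
have vs : comp_rel e X v s.
  move: (implyP (Ht A) AinB) => /forallP /(_ B) /implyP /(_ BinB).
  case/orP.
    case/existsP => x /andP [xA xB].
    exact: connect_trans (conB x xB) (conA x xA).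
  case/existsP => x /existsP [y /and3P [xA yB exy]].
  apply: connect_trans (conB y yB) _.
  apply: connect_trans _ (conA x xA); apply: connect1.
  rewrite /induced_rel /= e_sym exy andbT.
  by rewrite (subsetP sBX _ yB) (subsetP sAX _ xA).
apply/existsP; exists s; rewrite sA in_setU; apply/orP; right.
rewrite inE vs andbT in_setD sS andbT.
by move: (subsetP sAX _ sA); rewrite in_setC.
Qed.

Variable R : realType.

Lemma key (c : R) (hc1 : (1 / 2 <= c)%R) (hc2 : (c < 1)%R)
  (BB : {set {set T}}) k :
  bramble e BB -> sep_ok e c k ->
  ((bramble_order BB)%:R <= (1 - c)^-1 * k%:R :> R)%R.
Proof.
move=> brB /forallP /(_ [arg min_(X < setT | hitting BB X) #|X|]).
have hT : hitting BB setT.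
  apply/forallP => A; apply/implyP => AinB.
  case/andP: brB => /forallP /(_ A) /implyP /(_ AinB) /andP [+ _] _.
  case/set0Pn => x xA; apply/existsP; exists x; by rewrite xA in_setT.
case: arg_minnP => // S hS minS.
have oS : (bramble_order BB <= #|S|)%N.
  rewrite /bramble_order; apply: bigmin_le => //; exact: mem_index_enum.
case/existsP => X /andP [cX /forallP sepX].
have c1 : (0 < 1 - c)%R by rewrite subr_gt0.
rewrite ler_pdivlMl //.
have ineq : ((1 - c) * #|S|%:R <= k%:R :> R)%R.
  case: (boolP (hitting BB X)) => hX.
    have : (#|S| <= k)%N by apply: leq_trans (minS _ hX) cX.
    rewrite -(ler_nat R) => h; apply: le_trans h.
    rewrite mulrBl mul1r lerBlDr lerDl mulr_ge0 //; apply: le_trans hc1; by rewrite divr_ge0.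
  have [B /andP [BinB nBX]] : exists B, (B \in BB) && ~~ [exists x, (x \in B) && (x \in X)].
    move/forallP: hX; case/boolP: [exists B, (B \in BB) && ~~ [exists x, (x \in B) && (x \in X)]].
      by case/existsP => B HB; exists B.
    move=> H1 H2; exfalso; apply: H2 => A; apply/implyP => AinB.
    case: (boolP [exists x, (x \in A) && (x \in X)]) => // H.
    by move/negP: H1 => H1; exfalso; apply: H1; apply/existsP; exists A; rewrite AinB.
  have sBX : B \subset ~: X.
    apply/subsetP => x xB; rewrite in_setC; apply/negP => xX.
    by move/negP: nBX; apply; apply/existsP; exists x; rewrite xB.
  have := brB; case/andP => /forallP /(_ B) /implyP /(_ BinB) /andP [/set0Pn [v vB] _] _.
  have hH := @hit_comp BB S X B v brB hS BinB sBX vB.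
  have := minS _ hH.
  have vX : v \in ~: X by exact: (subsetP sBX).
  have := implyP (sepX v) vX.
  set C := [set w in S :\: X | comp_rel e X v w] => hC hSH.
  have hcard : (#|S| <= k + #|C|)%N.
    apply: (leq_trans hSH); rewrite cardsU; apply: leq_trans (leq_subr _ _) _.
    by rewrite leq_add2r.
  move: hcard; rewrite -(ler_nat R) natrD => hcard.
  rewrite mulrBl mul1r lerBlDr.
  apply: le_trans hcard _; rewrite lerD2l; exact: hC.
apply: le_trans ineq; rewrite ler_pM2l // ler_nat //.
Qed.
End Aux.

Theorem lemma8 (R : realType) (T : finType) (e : rel T)
  (e_sym : symmetric e) (e_irr : irreflexive e) (c : R)
  (hc1 : (1 / 2 <= c)%R) (hc2 : (c < 1)%R) :
  ((bramble_number e)%:R <= (1 - c)^-1 * (sep_star e c)%:R :> R)%R.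
Proof.
have c0 : (0 <= c)%R by apply: le_trans hc1; rewrite divr_ge0.
rewrite /sep_star; destruct (boolP (0 <= c)%R) as [h|h]; last by rewrite c0 in h.
case: ex_minnP => k hk _.
rewrite /bramble_number.
apply: (big_ind (fun n : nat => (n%:R <= (1 - c)^-1 * k%:R :> R)%R)).
- rewrite mulr_ge0 // ?invr_ge0 ?subr_ge0 ?ltW //.
- move=> x y hx hy; rewrite /maxn; by case: ltnP.
- by move=> BB brB; apply: (@key T e e_sym R c hc1 hc2 BB k brB hk).
Qed.
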